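(* Let $\sigma,\tau\in\mathcal T$, let $(w_n),(x_n)$ be defining sequences for $\sigma$ and $(y_n),(z_n)$ defining sequences for $\tau$. Then (i) for every $\alpha\in\mathbb Q$ the limits $\lim_n\overline{\alpha w_n}$ and $\lim_n\overline{\alpha x_n}$ exist in $\mathbb R^{\mathbb Q\times\Delta}$ and are equal; (ii) the iterated limits $\lim_n\lim_m\overline{w_n+y_m}$ and $\lim_n\lim_m\overline{x_n+z_m}$ exist and are equal.
   Context: Standing setting: $(X,\|\cdot\|)$ is a separable infinite-dimensional Banach space and $d$ is a translation-invariant ($d(x,y)=d(x-y,0)$) stable pseudometric on $X$ such that $\mathrm{Id}\colon(X,\|\cdot\|)\to(X,d)$ is a coarse equivalence ($\omega_{\mathrm{Id}}(t)=\sup\{d(x,y):\|x-y\|\le t\}<\infty$ for all $t$, $\rho_{\mathrm{Id}}(t)=\inf\{d(x,y):\|x-y\|\ge t\}\to\infty$). Stability: $\lim_{i,\mathcal U}\lim_{j,\mathcal V}d(x_i,y_j)=\lim_{j,\mathcal V}\lim_{i,\mathcal U}d(x_i,y_j)$ for bounded sequences and nonprincipal ultrafilters on $\mathbb N$. $\Delta$ is a countable $\|\cdot\|$-dense $\mathbb Q$-linear subspace of $X$; for $x\in\Delta$, $\bar x(\lambda,y)=d(\lambda x,y)$ for $(\lambda,y)\in\mathbb Q\times\Delta$. $\mathcal T$ is the closure of $\{\bar x:x\in\Delta\}$ in $\mathbb R^{\mathbb Q\times\Delta}$ (pointwise topology). A defining sequence for $\sigma\in\mathcal T$ is a sequence $(x_n)$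 in $\Delta$ with $\bar x_n\to\sigma$ pointwise. *)

(* Defs.v *)
From Stdlib Require Import Reals QArith Qreals List.
Open Scope R_scope.

Record NormedSpace (X : Type) := {
  vzero : X;
  vadd : X -> X -> X;
  vopp : X -> X;
  vscal : R -> X -> X;
  vnorm : X -> R;
  vadd_assoc : forall x y z, vadd x (vadd y z) = vadd (vadd x y) z;
  vadd_comm : forall x y, vadd x y = vadd y x;
  vadd_0 : forall x, vadd x vzero = x;
  vadd_opp : forall x, vadd x (vopp x) = vzero;
  vscal_1 : forall x, vscal 1 x = x;
  vscal_assoc : forall a b x, vscal a (vscal b x) = vscal (a * b) x;
  vscal_addr : forall a x y, vscal a (vadd x y) = vadd (vscal a x) (vscal a y);
  vscal_addl : forall a b x, vscal (a + b) x = vadd (vscal a x) (vscal b x);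
  vnorm_nonneg : forall x, 0 <= vnorm x;
  vnorm_eq0 : forall x, vnorm x = 0 -> x = vzero;
  vnorm_scal : forall a x, vnorm (vscal a x) = Rabs a * vnorm x;
  vnorm_triangle : forall x y, vnorm (vadd x y) <= vnorm x + vnorm y
}.

Arguments vzero {X} _.
Arguments vadd {X} _ _ _.
Arguments vopp {X} _ _.
Arguments vscal {X} _ _ _.
Arguments vnorm {X} _ _.

Definition vsub {X} (N : NormedSpace X) (x y : X) : X := vadd N x (vopp N y).

Definition complete {X} (N : NormedSpace X) : Prop :=
  forall u : nat -> X,
    (forall eps, eps > 0 -> exists M, forall m n, (m >= M)%nat -> (n >= M)%nat ->
        vnorm N (vsub N (u m) (u n)) < eps) ->
    exists l, forall eps, eps > 0 -> exists M, forall n, (n >= M)%nat ->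
        vnorm N (vsub N (u n) l) < eps.

Definition norm_dense {X} (N : NormedSpace X) (D : X -> Prop) : Prop :=
  forall x eps, eps > 0 -> exists y, D y /\ vnorm N (vsub N x y) < eps.

Definition countable_set {X} (D : X -> Prop) : Prop :=
  exists e : nat -> X, forall x, D x <-> exists n, e n = x.

Definition separable {X} (N : NormedSpace X) : Prop :=
  exists D : X -> Prop, countable_set D /\ norm_dense N D.

Fixpoint lin_comb {X} (N : NormedSpace X) (l : list X) (c : list R) : X :=
  match l, c with
  | x :: l', a :: c' => vadd N (vscal N a x) (lin_comb N l' c')
  | _, _ => vzero N
  end.

Definition in_span {X} (N : NormedSpace X) (l : list X) (x : X) : Prop :=
  exists c : list R, lin_comb N l c = x.

Definition infinite_dimensional {X} (N : NormedSpace X) : Prop :=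
  forall l : list X, exists x, ~ in_span N l x.

Definition separable_inf_dim_Banach {X} (N : NormedSpace X) : Prop :=
  complete N /\ separable N /\ infinite_dimensional N.

Definition pseudometric {X} (d : X -> X -> R) : Prop :=
  (forall x, d x x = 0) /\ (forall x y, 0 <= d x y) /\
  (forall x y, d x y = d y x) /\ (forall x y z, d x z <= d x y + d y z).

Definition translation_invariant {X} (N : NormedSpace X) (d : X -> X -> R) : Prop :=
  forall x y, d x y = d (vsub N x y) (vzero N).

(* Id : (X,||.||) -> (X,d) is a coarse equivalence:
   omega_Id(t) < oo for all t, and rho_Id(t) -> oo. *)
Definition coarse_equiv_Id {X} (N : NormedSpace X) (d : X -> X -> R) : Prop :=
  (forall t, exists M, forall x y, vnorm N (vsub N x y) <= t -> d x y <= M) /\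
  (forall K, exists t0, forall t, t >= t0 ->
       forall x y, vnorm N (vsub N x y) >= t -> d x y >= K).

Definition ultrafilter (U : (nat -> Prop) -> Prop) : Prop :=
  U (fun _ => True) /\ ~ U (fun _ => False) /\
  (forall A B : nat -> Prop, U A -> (forall n, A n -> B n) -> U B) /\
  (forall A B : nat -> Prop, U A -> U B -> U (fun n => A n /\ B n)) /\
  (forall A : nat -> Prop, U A \/ U (fun n => ~ A n)).

Definition nonprincipal (U : (nat -> Prop) -> Prop) : Prop :=
  forall k, ~ U (fun n => n = k).

Definition ulim (U : (nat -> Prop) -> Prop) (f : nat -> R) (l : R) : Prop :=
  forall eps, eps > 0 -> U (fun n => Rabs (f n - l) < eps).

Definition bounded_seq {X} (N : NormedSpace X) (x : nat -> X) : Prop :=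
  exists M, forall n, vnorm N (x n) <= M.

Definition stable {X} (N : NormedSpace X) (d : X -> X -> R) : Prop :=
  forall (U V : (nat -> Prop) -> Prop) (x y : nat -> X),
    ultrafilter U -> nonprincipal U -> ultrafilter V -> nonprincipal V ->
    bounded_seq N x -> bounded_seq N y ->
    forall (a : nat -> R) (l1 : R) (b : nat -> R) (l2 : R),
      (forall i, ulim V (fun j => d (x i) (y j)) (a i)) -> ulim U a l1 ->
      (forall j, ulim U (fun i => d (x i) (y j)) (b j)) -> ulim V b l2 ->
      l1 = l2.

Definition Q_linear_subspace {X} (N : NormedSpace X) (D : X -> Prop) : Prop :=
  D (vzero N) /\ (forall x y, D x -> D y -> D (vadd N x y)) /\
  (forall (q : Q) x, D x -> D (vscal N (Q2R q) x)).

Definition DeltaT {X} (D : X -> Prop) := { y : X | D y }.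

Definition xbar {X} (N : NormedSpace X) (d : X -> X -> R) (D : X -> Prop)
  (x : X) : Q -> DeltaT D -> R :=
  fun lam y => d (vscal N (Q2R lam) x) (proj1_sig y).

Definition pw_conv {X} (D : X -> Prop) (f : nat -> Q -> DeltaT D -> R)
  (g : Q -> DeltaT D -> R) : Prop :=
  forall lam y, Un_cv (fun n => f n lam y) (g lam y).

(* sigma lies in the pointwise (product-topology) closure T of {xbar : x in Delta}:
   every basic neighbourhood of sigma meets that set. *)
Definition in_T {X} (N : NormedSpace X) (d : X -> X -> R) (D : X -> Prop)
  (sigma : Q -> DeltaT D -> R) : Prop :=
  forall (F : list (Q * DeltaT D)) eps, eps > 0 ->
    exists x, D x /\ forall p, In p F ->
      Rabs (xbar N d D x (fst p) (snd p) - sigma (fst p) (snd p)) < eps.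

Definition defining_seq {X} (N : NormedSpace X) (d : X -> X -> R) (D : X -> Prop)
  (sigma : Q -> DeltaT D -> R) (x : nat -> X) : Prop :=
  (forall n, D (x n)) /\ pw_conv D (fun n => xbar N d D (x n)) sigma.

(* Main.v *)
Require Import Defs.
Module UFM.
From mathcomp Require Import all_boot classical_sets boolp filter.
Lemma uf_exists (P0 : nat -> Prop) :
  (forall M, exists n, le M n /\ P0 n) ->
  exists U : (nat -> Prop) -> Prop, ultrafilter U /\ nonprincipal U /\ U P0.
Proof.
move=> HS.
pose F := fun A : nat -> Prop => exists M, forall n, le M n -> P0 n -> A n.
have FF : ProperFilter F.
  apply: Build_ProperFilter_ex.
    move=> P [M HM]; have [n [h1 h2]] := HS M; by exists n; apply: HM.
  split.
  - by exists 0%N.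
  - move=> A B [M1 H1] [M2 H2]; exists (Nat.max M1 M2) => n hn sn; split.
      apply: H1 => //; exact: (PeanoNat.Nat.max_lub_l _ _ _ hn).
    apply: H2 => //; exact: (PeanoNat.Nat.max_lub_r _ _ _ hn).
  - move=> P Q PQ [M HM]; exists M => n h s; apply: PQ; exact: HM.
have [G [GU FG]] := ultraFilterLemma FF.
exists G; split; [|split].
- split; [exact: filterT|split; [exact: (filter_not_empty G)|split; [|split]]].
  + move=> A B GA AB; apply: filterS GA; exact: AB.
  + move=> A B GA GB; exact: filterI.
  + move=> A; exact: in_ultra_setVsetC.
- move=> k Gk.
  have Gnk : G (fun n => n <> k).
    apply: FG; exists (Datatypes.S k) => n hn _ e; subst; exact: (PeanoNat.Nat.nle_succ_diag_l _ hn).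
  apply: (filter_not_empty G); apply: filterS (filterI Gk Gnk) => n [h1 h2]; exact: h2 h1.
- apply: FG; by exists 0%N.
Qed.
End UFM.
From Stdlib Require Import Reals QArith Qreals List Lra Lia Classical ProofIrrelevance FunctionalExtensionality.
Open Scope R_scope.
Set Bullet Behavior "Strict Subproofs".
Open Scope R_scope.

Lemma abs_le x K : Rabs x <= K -> -K <= x /\ x <= K.
Proof. unfold Rabs; destruct (Rcase_abs x); lra. Qed.

Lemma nonpr_tail U : ultrafilter U -> nonprincipal U -> forall M, U (fun n => (M <= n)%nat).
Proof.
  intros [HT [HF [Hm [HI Hc]]]] Hnp M. induction M.
  - apply (Hm _ _ HT). intros; lia.
  - assert (Hne : U (fun n => ~ n = M)).
    { destruct (Hc (fun n => n = M)) as [h|h]; [exfalso; exact (Hnp M h)|exact h]. }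
    apply (Hm _ _ (HI _ _ IHM Hne)). intros n [h1 h2]. lia.
Qed.

Lemma conv_ulim U f l : ultrafilter U -> nonprincipal U -> Un_cv f l -> ulim U f l.
Proof.
  intros HU Hnp Hc eps Heps. destruct (Hc eps Heps) as [M HM].
  pose proof (nonpr_tail U HU Hnp M) as HT.
  destruct HU as [_ [_ [Hm _]]].
  apply (Hm _ _ HT). intros n hn. apply HM. lia.
Qed.

Lemma bounded_ulim U f K : ultrafilter U -> (forall n, Rabs (f n) <= K) -> exists l, ulim U f l.
Proof.
  intros HU Hb. pose proof HU as [HT [HF [Hm [HI Hc]]]].
  set (E := fun t => U (fun n => t <= f n)).
  assert (HE1 : bound E).
  { exists (K+1). intros t Ht. destruct (Rle_dec t (K+1)) as [h|h]; auto.
    exfalso. apply HF. apply (Hm _ _ Ht). intros n hn. specialize (Hb n).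
    apply abs_le in Hb. lra. }
  assert (HE2 : exists t, E t).
  { exists (-K). apply (Hm _ _ HT). intros n _. specialize (Hb n).
    apply abs_le in Hb. lra. }
  destruct (completeness E HE1 HE2) as [l [Hub Hlub]].
  exists l. intros eps Heps.
  assert (H1 : U (fun n => f n < l + eps)).
  { destruct (Hc (fun n => f n < l + eps)) as [h|h]; auto.
    assert (E (l + eps)). { apply (Hm _ _ h). intros n hn. lra. }
    specialize (Hub _ H). lra. }
  assert (H2 : exists t, E t /\ l - eps < t).
  { apply NNPP. intro hn. assert (is_upper_bound E (l - eps)).
    { intros t Et. destruct (Rle_dec t (l - eps)); auto. exfalso; apply hn.
      exists t; split; auto; lra. }
    specialize (Hlub _ H). lra. }
  destruct H2 as [t [Et Ht]].
  apply (Hm _ _ (HI _ _ H1 Et)). intros n [h1 h2]. apply Rabs_def1; lra.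
Qed.

Lemma lim_bound g l K : Un_cv g l -> (forall n, Rabs (g n) <= K) -> Rabs l <= K.
Proof.
  intros Hc Hb. destruct (Rle_dec (Rabs l) K) as [h|h]; auto. exfalso.
  destruct (Hc (Rabs l - K)) as [M HM]; [lra|].
  specialize (HM M (le_n M)). specialize (Hb M). unfold R_dist in HM.
  pose proof (Rabs_triang_inv l (g M)). rewrite Rabs_minus_sym in HM. lra.
Qed.

Lemma stab_conv X (N : NormedSpace X) d (Hst : stable N d) (P Q : nat -> X)
  (bP : bounded_seq N P) (bQ : bounded_seq N Q) (a b : nat -> R) K
  (Ha : forall n, Un_cv (fun m => d (P n) (Q m)) (a n))
  (Hb : forall m, Un_cv (fun n => d (P n) (Q m)) (b m))
  (Kb : forall n, Rabs (a n) <= K)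
  V0 (HV0 : ultrafilter V0) (HV0n : nonprincipal V0) l2 (Hl2 : ulim V0 b l2) :
  Un_cv a l2.
Proof.
  apply NNPP; intro Hn.
  assert (Hs : exists eps, eps > 0 /\ forall M, exists n, (M <= n)%nat /\ ~ R_dist (a n) l2 < eps).
  { apply NNPP; intro H1. apply Hn. intros eps Heps.
    apply NNPP; intro H2. apply H1. exists eps; split; auto. intro M.
    apply NNPP; intro H3. apply H2. exists M. intros n hn.
    apply NNPP; intro H4. apply H3. exists n; auto. }
  destruct Hs as [eps [Heps Hs]].
  destruct (UFM.uf_exists _ Hs) as [U [HU [HUn HUS]]].
  destruct (bounded_ulim U a K HU Kb) as [l1 Hl1].
  assert (E : l1 = l2).
  { apply (Hst U V0 P Q HU HUn HV0 HV0n bP bQ a l1 b l2); auto.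
    - intro i. apply conv_ulim; auto.
    - intro j. apply conv_ulim; auto. }
  subst l1. destruct HU as [HT [HF [Hm [HI Hc]]]].
  apply HF. apply (Hm _ _ (HI _ _ (Hl1 eps Heps) HUS)). intros n [h1 h2]. apply h2. exact h1.
Qed.
Section Vec.
Variable X : Type.
Variable N : NormedSpace X.

Lemma vadd_0l x : vadd N (vzero N) x = x.
Proof. rewrite vadd_comm; apply vadd_0. Qed.

Lemma vadd_cancel a b c : vadd N a b = vadd N a c -> b = c.
Proof.
  intro H.
  assert (E : forall t, vadd N (vopp N a) (vadd N a t) = t).
  { intro t. rewrite vadd_assoc, (vadd_comm _ N (vopp N a)), vadd_opp. apply vadd_0l. }
  rewrite <- (E b), <- (E c), H; reflexivity.
Qed.

Lemma vscal_0 x : vscal N 0 x = vzero N.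
Proof.
  apply (vadd_cancel (vscal N 0 x)).
  rewrite <- vscal_addl, vadd_0. f_equal. ring.
Qed.

Lemma vopp_scal x : vopp N x = vscal N (-1) x.
Proof.
  apply (vadd_cancel x). rewrite vadd_opp.
  rewrite <- (vscal_1 _ N x) at 1. rewrite <- vscal_addl.
  replace (1 + -1) with 0 by ring. symmetry; apply vscal_0.
Qed.

Lemma vsub_key a v b : vsub N a (vsub N v b) = vsub N (vadd N a b) v.
Proof.
  unfold vsub. rewrite !vopp_scal, vscal_addr, vscal_assoc.
  replace (-1 * -1) with 1 by ring. rewrite vscal_1.
  rewrite vadd_assoc, <- (vadd_assoc _ N a b), (vadd_comm _ N b), vadd_assoc. reflexivity.
Qed.

Lemma vnorm_opp x : vnorm N (vopp N x) = vnorm N x.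
Proof. rewrite vopp_scal, vnorm_scal. replace (Rabs (-1)) with 1; [ring|]; rewrite Rabs_left; lra. Qed.

Lemma vnorm_sub x y : vnorm N (vsub N x y) <= vnorm N x + vnorm N y.
Proof. unfold vsub. rewrite <- (vnorm_opp y). apply vnorm_triangle. Qed.

Lemma vscal_z a : vscal N a (vzero N) = vzero N.
Proof. rewrite <- (vscal_0 (vzero N)), vscal_assoc. replace (a*0) with 0 by ring. reflexivity. Qed.

Lemma vsub_0 x : vsub N x (vzero N) = x.
Proof. unfold vsub. rewrite vopp_scal, vscal_z. apply vadd_0. Qed.

Lemma D_shift (D : X -> Prop) (HD : Q_linear_subspace N D) v (lam : Q) x :
  D v -> D x -> D (vsub N v (vscal N (Q2R lam) x)).
Proof.
  destruct HD as [H0 [Hadd Hsc]]. intros Hv Hx. unfold vsub.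
  rewrite vopp_scal, vscal_assoc. apply Hadd; auto.
  replace (-1 * Q2R lam) with (Q2R (- lam)) by (rewrite Q2R_opp; ring).
  apply Hsc; auto.
Qed.
End Vec.

Lemma Q2R_1' : Q2R 1 = 1.
Proof. unfold Q2R; simpl; field. Qed.

Section Main.
Variable X : Type.
Variable N : NormedSpace X.
Variable d : X -> X -> R.
Variable D : X -> Prop.
Hypothesis Hd : pseudometric d.
Hypothesis Hti : translation_invariant N d.
Hypothesis Hce : coarse_equiv_Id N d.
Hypothesis HDq : Q_linear_subspace N D.

Lemma def_bounded sigma u : defining_seq N d D sigma u -> bounded_seq N u.
Proof.
  intros [_ Hc]. destruct HDq as [H0 _].
  specialize (Hc 1%Q (exist D (vzero N) H0)).
  assert (Hb := cauchy_bound _ (CV_Cauchy _ (exist _ _ Hc))).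
  destruct Hb as [K HK].
  assert (HK' : forall n, d (u n) (vzero N) <= K).
  { intro n. specialize (HK (xbar N d D (u n) 1%Q (exist D (vzero N) H0))).
    unfold xbar in HK; simpl in HK. rewrite <- (vscal_1 _ N (u n)), <- Q2R_1'. apply HK. exists n; reflexivity. }
  destruct Hce as [_ Hrho]. destruct (Hrho (K+1)) as [t0 Ht0].
  exists t0. intro n. destruct (Rle_dec (vnorm N (u n)) t0) as [h|h]; auto. exfalso.
  assert (h2 := Ht0 t0 (Rge_refl _) (u n) (vzero N)). rewrite vsub_0 in h2.
  specialize (HK' n). lra.
Qed.

Lemma d_bound P Q : bounded_seq N P -> bounded_seq N Q ->
  exists K, forall n m, Rabs (d (P n) (Q m)) <= K.
Proof.
  intros [MP HP] [MQ HQ]. destruct Hce as [Hom _]. destruct (Hom (MP + MQ)) as [M HM].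
  exists M. intros n m. destruct Hd as [_ [Hpos _]]. rewrite Rabs_right by (apply Rle_ge; auto).
  apply HM. pose proof (vnorm_sub X N (P n) (Q m)). specialize (HP n); specialize (HQ m). lra.
Qed.

Lemma d_swap a v b : d a (vsub N v b) = d b (vsub N v a).
Proof. rewrite Hti, (Hti b), !vsub_key, vadd_comm. reflexivity. Qed.

Lemma d_add a b v : d (vadd N a b) v = d b (vsub N v a).
Proof. rewrite Hti, (Hti b), vsub_key, vadd_comm. reflexivity. Qed.

Definition shiftD (v : DeltaT D) (lam : Q) (x : X) (hx : D x) : DeltaT D :=
  exist _ (vsub N (proj1_sig v) (vscal N (Q2R lam) x))
    (D_shift X N D HDq _ lam x (proj2_sig v) hx).

Lemma scal_bounded c u : bounded_seq N u -> bounded_seq N (fun n => vscal N c (u n)).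
Proof.
  intros [M HM]. exists (Rabs c * M). intro n. rewrite vnorm_scal.
  apply Rmult_le_compat_l; [apply Rabs_pos|auto].
Qed.

Lemma part2 (Hst : stable N d) sigma tau (y : nat -> X) (Hy : defining_seq N d D tau y)
  (Hy1 : forall m, D (y m))
  V0 (HV0 : ultrafilter V0) (HV0n : nonprincipal V0) lam v l2
  (Hl2 : ulim V0 (fun m => sigma lam (shiftD v lam (y m) (Hy1 m))) l2)
  u (Hu : defining_seq N d D sigma u) (Hu1 : forall n, D (u n)) :
  Un_cv (fun n => tau lam (shiftD v lam (u n) (Hu1 n))) l2.
Proof.
  set (P := fun n => vscal N (Q2R lam) (u n)).
  set (Qs := fun m => vsub N (proj1_sig v) (vscal N (Q2R lam) (y m))).
  assert (bP : bounded_seq N P) by (apply scal_bounded; eapply def_bounded; eauto).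
  assert (bQ : bounded_seq N Qs).
  { destruct (scal_bounded (Q2R lam) _ (def_bounded _ _ Hy)) as [M HM].
    exists (vnorm N (proj1_sig v) + M). intro m. unfold Qs.
    pose proof (vnorm_sub X N (proj1_sig v) (vscal N (Q2R lam) (y m))). specialize (HM m). simpl in HM. lra. }
  destruct (d_bound P Qs bP bQ) as [K HK].
  assert (Ha : forall n, Un_cv (fun m => d (P n) (Qs m)) (tau lam (shiftD v lam (u n) (Hu1 n)))).
  { intro n. destruct Hy as [_ Hy2]. specialize (Hy2 lam (shiftD v lam (u n) (Hu1 n))).
    unfold xbar in Hy2; simpl in Hy2.
    replace (fun m => d (P n) (Qs m)) with
      (fun m => d (vscal N (Q2R lam) (y m)) (vsub N (proj1_sig v) (vscal N (Q2R lam) (u n)))).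
    - exact Hy2.
    - apply functional_extensionality; intro m. unfold P, Qs. apply d_swap. }
  eapply (stab_conv X N d Hst P Qs bP bQ _ _ K Ha).
  - intro m. destruct Hu as [_ Hu2]. exact (Hu2 lam (shiftD v lam (y m) (Hy1 m))).
  - intro n. apply (lim_bound _ _ K (Ha n)). intro m; apply HK.
  - exact HV0.
  - exact HV0n.
  - exact Hl2.
Qed.

Lemma b_bounded sigma tau (y : nat -> X) (Hy : defining_seq N d D tau y)
  (Hy1 : forall m, D (y m)) w (Hw : defining_seq N d D sigma w) lam v :
  exists K, forall m, Rabs (sigma lam (shiftD v lam (y m) (Hy1 m))) <= K.
Proof.
  set (P := fun n => vscal N (Q2R lam) (w n)).
  set (Qs := fun m => vsub N (proj1_sig v) (vscal N (Q2R lam) (y m))).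
  assert (bP : bounded_seq N P) by (apply scal_bounded; eapply def_bounded; eauto).
  assert (bQ : bounded_seq N Qs).
  { destruct (scal_bounded (Q2R lam) _ (def_bounded _ _ Hy)) as [M HM].
    exists (vnorm N (proj1_sig v) + M). intro m. unfold Qs.
    pose proof (vnorm_sub X N (proj1_sig v) (vscal N (Q2R lam) (y m))). specialize (HM m). simpl in HM. lra. }
  destruct (d_bound P Qs bP bQ) as [K HK].
  exists K. intro m. destruct Hw as [_ Hw2].
  apply (lim_bound _ _ K (Hw2 lam (shiftD v lam (y m) (Hy1 m)))).
  intro n. apply HK.
Qed.
End Main.

From Stdlib Require Import ClassicalEpsilon.

Theorem lemma4p3 (X : Type) (N : NormedSpace X) (d : X -> X -> R)
  (D : X -> Prop)
  (HX : separable_inf_dim_Banach N)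
  (Hd : pseudometric d) (Hti : translation_invariant N d)
  (Hst : stable N d) (Hce : coarse_equiv_Id N d)
  (HD : countable_set D /\ norm_dense N D /\ Q_linear_subspace N D)
  (sigma tau : Q -> DeltaT D -> R)
  (Hsig : in_T N d D sigma) (Htau : in_T N d D tau)
  (w x y z : nat -> X)
  (Hw : defining_seq N d D sigma w) (Hx : defining_seq N d D sigma x)
  (Hy : defining_seq N d D tau y) (Hz : defining_seq N d D tau z) :
  (forall alpha : Q, exists L : Q -> DeltaT D -> R,
      pw_conv D (fun n => xbar N d D (vscal N (Q2R alpha) (w n))) L /\
      pw_conv D (fun n => xbar N d D (vscal N (Q2R alpha) (x n))) L)
  /\
  (exists (A B : nat -> Q -> DeltaT D -> R) (L : Q -> DeltaT D -> R),
      (forall n, pw_conv D (fun m => xbar N d D (vadd N (w n) (y m))) (A n)) /\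
      pw_conv D A L /\
      (forall n, pw_conv D (fun m => xbar N d D (vadd N (x n) (z m))) (B n)) /\
      pw_conv D B L).
Proof.
  destruct HD as [_ [_ HDq]].
  split.
  - intro alpha. exists (fun lam v => sigma (lam * alpha)%Q v).
    assert (G : forall u, defining_seq N d D sigma u ->
      pw_conv D (fun n => xbar N d D (vscal N (Q2R alpha) (u n))) (fun lam v => sigma (lam * alpha)%Q v)).
    { intros u [_ Hu2] lam v. specialize (Hu2 (lam * alpha)%Q v).
      unfold xbar in *. rewrite Q2R_mult in Hu2.
      replace (fun n => d (vscal N (Q2R lam) (vscal N (Q2R alpha) (u n))) (proj1_sig v))
        with (fun n => d (vscal N (Q2R lam * Q2R alpha) (u n)) (proj1_sig v)); [exact Hu2|].
      apply functional_extensionality; intro n. rewrite vscal_assoc. reflexivity. }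
    split; apply G; auto.
  - destruct (UFM.uf_exists (fun _ => True)) as [V0 [HV0 [HV0n _]]].
    { intro M; exists M; split; auto. }
    pose proof (proj1 Hw) as Hw1. pose proof (proj1 Hx) as Hx1.
    pose proof (proj1 Hy) as Hy1. pose proof (proj1 Hz) as Hz1.
    assert (Hex : forall lam v, exists l2,
      ulim V0 (fun m => sigma lam (shiftD X N D HDq v lam (y m) (Hy1 m))) l2).
    { intros lam v. destruct (b_bounded X N d D Hd Hce HDq sigma tau y Hy Hy1 w Hw lam v) as [K HK].
      exact (bounded_ulim _ _ K HV0 HK). }
    set (L := fun lam v => proj1_sig (constructive_indefinite_description _ (Hex lam v))).
    assert (HL : forall lam v, ulim V0 (fun m => sigma lam (shiftD X N D HDq v lam (y m) (Hy1 m))) (L lam v)).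
    { intros lam v. unfold L. exact (proj2_sig (constructive_indefinite_description _ (Hex lam v))). }
    exists (fun n lam v => tau lam (shiftD X N D HDq v lam (w n) (Hw1 n))).
    exists (fun n lam v => tau lam (shiftD X N D HDq v lam (x n) (Hx1 n))).
    exists L.
    assert (G1 : forall (u t : nat -> X) (Hu1 : forall n, D (u n)), defining_seq N d D tau t ->
      forall n, pw_conv D (fun m => xbar N d D (vadd N (u n) (t m)))
                 (fun lam v => tau lam (shiftD X N D HDq v lam (u n) (Hu1 n)))).
    { intros u t Hu1 [_ Ht2] n lam v. specialize (Ht2 lam (shiftD X N D HDq v lam (u n) (Hu1 n))).
      unfold xbar in *; simpl in *.
      replace (fun m => d (vscal N (Q2R lam) (vadd N (u n) (t m))) (proj1_sig v))
        with (fun m => d (vscal N (Q2R lam) (t m)) (vsub N (proj1_sig v) (vscal N (Q2R lam) (u n)))); [exact Ht2|].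
      apply functional_extensionality; intro m. rewrite vscal_addr, d_add; auto. }
    split; [|split; [|split]].
    + apply G1; auto.
    + intros lam v. exact (part2 X N d D Hd Hti Hce HDq Hst sigma tau y Hy Hy1 V0 HV0 HV0n lam v _ (HL lam v) w Hw Hw1).
    + apply G1; auto.
    + intros lam v. exact (part2 X N d D Hd Hti Hce HDq Hst sigma tau y Hy Hy1 V0 HV0 HV0n lam v _ (HL lam v) x Hx Hx1).
Qed.
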